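(* Let $M$ be a nondegenerate $(0,1)$-matrix of order $n$, and let $A$ be the matrix of order $n+1$ obtained from $M$ by adding an $(n+1)$th row $(0,\dots,0,1)$ and an $(n+1)$th column consisting of $1$'s. Write $A^{-1}=(l_{ij})$. Then for each $i=1,\dots,n$, $\sum_{j=1}^{n+1}|l_{ij}|\ge2$. If $|\det M|=h_n$, then $\sum_{j=1}^{n+1}|l_{ij}|=2$ for all $i=1,\dots,n$. Consequently, if $\sum_{j=1}^{n+1}|l_{ij}|>2$ for some $i$, then $|\det M|<h_n$.
   Context: $h_n$ denotes the maximal value of the determinant of an $n\times n$ matrix with all entries in $\{0,1\}$. *)

(* Defs.v *)
From HB Require Import structures.
From mathcomp Require Import all_boot all_order all_algebra.
Set Implicit Arguments. Unset Strict Implicit. Unset Printing Implicit Defensive.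
Import Order.TTheory GRing.Theory Num.Theory.
Local Open Scope ring_scope.

(* A (0,1)-matrix of order n is encoded by a boolean matrix; its integer
   realisation has entries 0 or 1. *)
Definition int01 (n : nat) (B : 'M[bool]_n) : 'M[int]_n :=
  map_mx (fun b : bool => (b : nat)%:Z) B.

(* h n = maximal value of the determinant of an n x n (0,1)-matrix.
   (The identity matrix has determinant 1 > 0, so starting the max at 0 is harmless.) *)
Definition h (n : nat) : int :=
  \big[Num.max/0]_(B : 'M[bool]_n) \det (int01 B).

(* A = [ M  1 ]
       [ 0  1 ]  : the (n+1)-th row is (0,...,0,1), the (n+1)-th column is all 1's. *)
Definition augment (R : nzRingType) (n : nat) (M : 'M[R]_n) : 'M[R]_n.+1 :=
  \matrix_(i < n.+1, j < n.+1)
    match unlift ord_max i, unlift ord_max j with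
    | Some i', Some j' => M i' j'
    | _, None => 1
    | None, Some _ => 0
    end.

Definition inv_row_abs_sum (R : realFieldType) (n : nat) (M : 'M[R]_n) (i : 'I_n) : R :=
  \sum_(j < n.+1) `| (invmx (augment M)) (lift ord_max i) j |.

(* Main.v *)
Require Import Defs.
From HB Require Import structures.
From mathcomp Require Import all_boot all_order all_algebra all_fingroup.
From mathcomp Require Import ring lra.
Import Order.TTheory GRing.Theory Num.Theory.
Local Open Scope ring_scope.

Lemma det_le_h (R : realFieldType) n (N : 'M[R]_n)
  (HN : forall i j, N i j = 0 \/ N i j = 1) : \det N <= (h n)%:~R.
Proof.
set B := \matrix_(i,j) (N i j == 1).
have -> : N = map_mx intr (int01 B).
  apply/matrixP => i j; rewrite !mxE; case: (HN i j) => -> //.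
  by rewrite eq_sym oner_eq0.
  by rewrite eqxx.
rewrite det_map_mx ler_int /h.
exact: (le_bigmax 0 (fun B => \det (int01 B)) B).
Qed.

Lemma abs_det_le_h (R : realFieldType) n (N : 'M[R]_n)
  (HN : forall i j, N i j = 0 \/ N i j = 1) : `|\det N| <= (h n)%:~R.
Proof.
have [d0|d0] := leP 0 (\det N).
  by rewrite ger0_norm //; exact: det_le_h.
rewrite ltr0_norm //.
move: N HN d0; case: n => [|[|m]] N HN d0.
- by rewrite det_mx00 ltr10 in d0.
- rewrite det_mx11 in d0; case: (HN 0 0) d0 => ->; rewrite ?ltxx // ltr10 //.
- have HP : forall i j, row_perm (tperm (0 : 'I_m.+2) 1) N i j = 0 \/ row_perm (tperm (0 : 'I_m.+2) 1) N i j = 1.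
    by move=> i j; rewrite mxE; exact: HN.
  have := @det_le_h _ _ _ HP.
  by rewrite row_permE det_mulmx det_perm odd_tperm /= expr1 mulN1r.
Qed.

Lemma det_augment (R : comUnitRingType) n (M : 'M[R]_n) : \det (augment M) = \det M.
Proof.
rewrite (expand_det_row _ ord_max) (bigD1 ord_max) //= big1 ?addr0.
  rewrite !mxE unlift_none /cofactor mul1r addnn -signr_odd odd_double expr0 mul1r.
  congr (\det _); apply/matrixP => a b; rewrite !mxE !liftK //.
move=> j jn; rewrite !mxE unlift_none.
by case: unliftP jn => [j' ->|->]; rewrite ?eqxx // mul0r.
Qed.

Section Main.
Variables (R : realFieldType) (n : nat) (M : 'M[R]_n).
Hypothesis H01 : forall i j, M i j = 0 \/ M i j = 1.
Hypothesis Hnd : \det M != 0.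
Variable i : 'I_n.

Let A : 'M[R]_n.+1 := augment M.
Let y (j : 'I_n.+1) : R := invmx A (lift ord_max i) j.
Let x (k : 'I_n) : R := y (lift ord_max k).

Lemma colEq (c : 'I_n.+1) : \sum_k y k * A k c = (lift ord_max i == c)%:R.
Proof.
have U : A \in unitmx by rewrite unitmxE det_augment unitfE.
have E := mulVmx U.
have := congr1 (fun B : 'M[R]_n.+1 => B (lift ord_max i) c) E.
by rewrite !mxE => <-.
Qed.

Lemma wl (k : 'I_n) : widen_ord (leqnSn n) k = lift ord_max k.
Proof. by apply: val_inj; rewrite /= /bump leqNgt ltn_ord. Qed.

Lemma A_last r : A r ord_max = 1.
Proof. by rewrite /A mxE unlift_none; case: unlift. Qed.

Lemma A_lift r s : A (lift ord_max r) (lift ord_max s) = M r s.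
Proof. by rewrite /A mxE !liftK. Qed.

Lemma A_ml s : A ord_max (lift ord_max s) = 0.
Proof. by rewrite /A mxE unlift_none liftK. Qed.

Lemma sum_y : y ord_max = - \sum_k x k.
Proof.
have := colEq ord_max; rewrite big_ord_recr /=.
rewrite eq_sym (negbTE (neq_lift _ _)) A_last mulr1.
under eq_bigr do rewrite A_last mulr1 wl.
by move/eqP; rewrite addrC addr_eq0 => /eqP.
Qed.

Lemma delta (j : 'I_n) : \sum_k x k * M k j = (i == j)%:R.
Proof.
have := colEq (lift ord_max j); rewrite big_ord_recr /= A_ml mulr0 addr0.
rewrite (inj_eq lift_inj) => <-.
by apply: eq_bigr => k _; rewrite wl A_lift.
Qed.

Lemma cofE k : cofactor M k i = \det M * x k.
Proof.
pose X : 'rV[R]_n := \row_k x k.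
have HX : X *m M = 'e_i.
  apply/rowP => j; rewrite !mxE.
  under eq_bigr do rewrite mxE.
  by rewrite delta eqxx /= eq_sym.
have E : X *m M *m \adj M = 'e_i *m \adj M by rewrite HX.
rewrite -mulmxA mul_mx_adj mul_mx_scalar -rowE in E.
have := congr1 (fun B : 'rV[R]_n => B 0 k) E; rewrite !mxE => ->.
by [].
Qed.

Lemma det_repl (c : 'I_n -> R) :
  \det (\matrix_(r, s) if s == i then c r else M r s) = \det M * \sum_r x r * c r.
Proof.
rewrite (expand_det_col _ i) mulr_sumr; apply: eq_bigr => r _.
rewrite mxE eqxx.
have -> : cofactor (\matrix_(r, s) if s == i then c r else M r s) r i = cofactor M r i.
  rewrite /cofactor; congr (_ * \det _); apply/matrixP => a b.
  by rewrite !mxE eq_sym (negbTE (neq_lift _ _)).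
rewrite cofE; ring.
Qed.

Lemma S_eq : inv_row_abs_sum M i = \sum_k `|x k| + `|\sum_k x k|.
Proof.
rewrite /inv_row_abs_sum big_ord_recr /=; congr (_ + _).
  by apply: eq_bigr => k _; rewrite wl.
have -> : invmx (augment M) (lift ord_max i) ord_max = y ord_max by [].
by rewrite sum_y normrN.
Qed.

Let cp (r : 'I_n) : R := if 0 < x r then 1 else 0.
Let cn (r : 'I_n) : R := if x r < 0 then 1 else 0.

Lemma le_pos (c : 'I_n -> R) (Hc : forall r, c r = 0 \/ c r = 1) :
  \sum_r x r * c r <= \sum_r x r * cp r.
Proof.
apply: ler_sum => r _; rewrite /cp; case: (Hc r) => ->;
  case: ltgtP => h /=; rewrite ?mulr0 ?mulr1; lra.
Qed.

Lemma ge_neg (c : 'I_n -> R) (Hc : forall r, c r = 0 \/ c r = 1) :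
  \sum_r x r * cn r <= \sum_r x r * c r.
Proof.
apply: ler_sum => r _; rewrite /cn; case: (Hc r) => ->;
  case: ltgtP => h /=; rewrite ?mulr0 ?mulr1; lra.
Qed.

Lemma split_pos : \sum_k `|x k| + \sum_k x k = 2 * \sum_r x r * cp r.
Proof.
rewrite -big_split mulr_sumr; apply: eq_bigr => r _ /=; rewrite /cp.
case: ltgtP => h /=; rewrite ?mulr0 ?mulr1.
all: first [rewrite ltr0_norm //; lra | rewrite gtr0_norm //; lra
           | rewrite -h normr0; lra | rewrite h normr0; lra].
Qed.

Lemma split_neg : \sum_k `|x k| - \sum_k x k = - 2 * \sum_r x r * cn r.
Proof.
rewrite -sumrN -big_split mulr_sumr; apply: eq_bigr => r _ /=; rewrite /cn.
case: ltgtP => h /=; rewrite ?mulr0 ?mulr1.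
all: first [rewrite ltr0_norm //; lra | rewrite gtr0_norm //; lra
           | rewrite -h normr0; lra | rewrite h normr0; lra].
Qed.

Lemma part1 : 2 <= inv_row_abs_sum M i.
Proof.
rewrite S_eq.
have h1 : \sum_k x k <= `|\sum_k x k| by apply: ler_norm.
have h2 := le_pos (fun r => M r i) (fun r => H01 r i).
rewrite delta eqxx /= in h2.
have := split_pos; lra.
Qed.

Lemma bigger (c : 'I_n -> R) (Hc : forall r, c r = 0 \/ c r = 1)
  (Ht : 1 < `|\sum_r x r * c r|) : `|\det M| < (h n)%:~R.
Proof.
have Hl := @abs_det_le_h R n (\matrix_(r, s) if s == i then c r else M r s).
have {}Hl : `|\det (\matrix_(r, s) if s == i then c r else M r s)| <= (h n)%:~R.
  apply: Hl => r s; rewrite mxE; case: (s == i); [exact: Hc | exact: H01].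
rewrite det_repl normrM in Hl.
have hp : 0 < `|\det M| by rewrite normr_gt0.
apply: lt_le_trans Hl; nra.
Qed.

Lemma part3 : 2 < inv_row_abs_sum M i -> `|\det M| < (h n)%:~R.
Proof.
rewrite S_eq => HS.
have [hs|hs] := lerP 0 (\sum_k x k).
- apply: (@bigger cp).
    by move=> r; rewrite /cp; case: (0 < x r); [right|left].
  have := split_pos; rewrite (ger0_norm hs) in HS.
  have := le_pos (fun _ => 0) (fun _ => or_introl erefl).
  rewrite [X in X <= _]big1 => [h0 hsp|r _]; last exact: mulr0.
  rewrite ger0_norm; lra.
- apply: (@bigger cn).
    by move=> r; rewrite /cn; case: (x r < 0); [right|left].
  have := split_neg; rewrite (ltr0_norm hs) in HS.
  have := ge_neg (fun _ => 0) (fun _ => or_introl erefl).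
  rewrite [X in _ <= X]big1 => [h0 hsp|r _]; last exact: mulr0.
  rewrite ler0_norm; lra.
Qed.

End Main.

Theorem theorem9p1 (R : realFieldType) (n : nat) (M : 'M[R]_n)
  (H01 : forall i j, M i j = 0 \/ M i j = 1)
  (Hnd : \det M != 0) :
  (forall i : 'I_n, 2 <= inv_row_abs_sum M i) /\
  (`|\det M| = (h n)%:~R -> forall i : 'I_n, inv_row_abs_sum M i = 2) /\
  ((exists i : 'I_n, 2 < inv_row_abs_sum M i) -> `|\det M| < (h n)%:~R).
Proof.
split; first by move=> i; exact: part1.
split.
  move=> He i; have := @part1 R n M H01 Hnd i; rewrite le_eqVlt => /orP[/eqP //|].
  by move/(@part3 R n M H01 Hnd i); rewrite He ltxx.
by case=> i; exact: part3.
Qed.
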